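(* Let $S_m$ be the random walk below and $I$ the function below. Then for every integer $m>0$ and $x\in[0,1)$, $$\mathbb P\Big(\sup_{0\le k\le m}S_k\ge xm\Big)\le e^{-mI(x)},$$ in particular $\mathbb P(S_m\ge xm)\le e^{-mI(x)}$. Furthermore there is $\varepsilon>0$ with $I(x)\ge\varepsilon x^2$ for all $x\in[0,1)$, and consequently $\mathbb P(\sup_{0\le k\le m}S_k\ge xm)\le e^{-\varepsilon mx^2}$ and $\mathbb P(S_m\ge xm)\le e^{-\varepsilon mx^2}$ for all $x\ge0$.
   Context: $S_m=X^{(1)}+\dots+X^{(m)}$, $S_0=0$, with i.i.d. steps distributed as $X=X_1+X_2$, where $X_1,X_2$ are independent, $\mathbb P(X_1=0)=(\sqrt2-1)/\sqrt2$, $\mathbb P(X_1=1)=1/\sqrt2$, $\mathbb P(X_2=-k)=\sqrt2(\sqrt2-1)^{k+1}$ for $k=0,1,2,\dots$. For $x<1$, $$I(x)=(2-x)\log(\sqrt2+1)+(1-x)\log\Big(\frac{1-x}{1+\sqrt{1+(1-x)^2}}\Big)+\log\Big(\frac{x+\sqrt{1+(1-x)^2}}{2-x+\sqrt{1+(1-x)^2}}\Big).$$ *)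

(* Defs.v *)
From HB Require Import structures.
From mathcomp Require Import all_boot all_order all_algebra.
From mathcomp Require Import all_classical all_reals all_analysis.
Set Implicit Arguments. Unset Strict Implicit. Unset Printing Implicit Defensive.
Import Order.TTheory GRing.Theory Num.Theory.
Local Open Scope classical_set_scope.
Local Open Scope ring_scope.

Section Defs.
Variable R : realType.

Definition sqrt2 : R := Num.sqrt 2.

Definition pX1 (a : int) : R :=
  if a == 0 then (sqrt2 - 1) / sqrt2
  else if a == 1 then 1 / sqrt2 else 0.

Definition pX2 (b : int) : R :=
  if b <= 0 then sqrt2 * (sqrt2 - 1) ^+ (`|b|%N).+1 else 0.

(* law of X = X1 + X2 with X1, X2 independent: P(X = z) *)
Definition pX (z : int) : R := pX1 0 * pX2 z + pX1 1 * pX2 (z - 1).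

Definition rateI (x : R) : R :=
  let r := Num.sqrt (1 + (1 - x) ^+ 2) in
  (2 - x) * ln (sqrt2 + 1)
  + (1 - x) * ln ((1 - x) / (1 + r))
  + ln ((x + r) / (2 - x + r)).

(* the walk S_k = X^(0) + ... + X^(k-1) (steps indexed from 0) *)
Definition walk (T : Type) (X : nat -> T -> R) (k : nat) (t : T) : R :=
  \sum_(i < k) X i t.

(* Mutual independence of the whole
   sequence is expressed through the product rule for every initial segment
   and every family of measurable sets (taking B i = setT for unused indices
   recovers the product rule for any finite subfamily). *)
Definition iid_steps (d : measure_display) (T : measurableType d)
    (P : probability T R) (X : nat -> T -> R) : Prop :=
  (forall i, measurable_fun setT (X i)) /\
  (forall (n : nat) (B : nat -> set R), (forall i, measurable (B i)) ->
     P [set t | forall i, (i < n)%N -> X i t \in B i]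
     = (\prod_(i < n) P (X i @^-1` B i))%E) /\
  (forall (i : nat) (z : int), P (X i @^-1` [set (z%:~R : R)]) = (pX z)%:E).

Definition sup_event (T : Type) (X : nat -> T -> R) (m : nat) (x : R) : set T :=
  [set t | exists k, (k <= m)%N /\ x * m%:R <= walk X k t].

Definition end_event (T : Type) (X : nat -> T -> R) (m : nat) (x : R) : set T :=
  [set t | x * m%:R <= walk X m t].

End Defs.

(* Main.v *)
Require Import Defs.
From HB Require Import structures.
From mathcomp Require Import all_boot all_order all_algebra.
From mathcomp Require Import all_classical all_reals all_analysis.
From mathcomp Require Import ring lra.
Import Order.TTheory GRing.Theory Num.Theory.
Import numFieldNormedType.Exports.
Local Open Scope classical_set_scope.
Local Open Scope ring_scope.

Section Aux.
Variable R : realType.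
Local Notation s2 := (sqrt2 R).
Definition qq : R := sqrt2 R - 1.
Local Notation q := qq.

Lemma s2_sq : s2 ^+ 2 = 2.
Proof. by rewrite /sqrt2 sqr_sqrtr // ler0n. Qed.
Lemma s2_ge0 : 0 <= s2.
Proof. exact: sqrtr_ge0. Qed.
Lemma q_gt0 : 0 < q.
Proof. have := s2_sq; have := s2_ge0; rewrite /qq; nra. Qed.
Lemma q_lt1 : q < 1.
Proof. have := s2_sq; have := s2_ge0; rewrite /qq; nra. Qed.
Lemma qsq : q ^+ 2 = 1 - 2 * q.
Proof. have := s2_sq; rewrite /qq; nra. Qed.
Lemma q_bounds : 41/100 <= q <= 42/100.
Proof. have := s2_sq; have := s2_ge0; rewrite /qq => ? ?; apply/andP; split; nra. Qed.

Lemma expR_ge_quad (x : R) : 0 <= x -> 1 + x + x ^+ 2 / 2 <= expR x.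
Proof.
move=> x0; rewrite /expR.
pose f : nat -> R := fun i => (i < 3)%N%:R * exp_coeff x i.
have F m : (2 < m)%N -> \sum_(0 <= i < m) f i = 1 + x + x ^+ 2 / 2.
  move=> m2; rewrite (@big_cat_nat _ _ _ 3)//=.
  have -> : \sum_(3 <= i < m) f i = 0.
    rewrite big_nat_cond big1 // => i /andP[/andP[i3 _] _].
    by rewrite /f ltnNge i3 mul0r.
  rewrite addr0.
  rewrite !big_nat_recl // big_geq // addr0 /f /= !mul1r !exp_coeffE /=.
  rewrite expr0 expr1 (_ : 2`!%:R = 2 :> R) // (_ : 0`! = 1)%N // (_ : 1`! = 1)%N // invr1 mulr1 mul1r addrA mulrC //.
rewrite [leLHS](_ : _ = limn (series f)); last first.
  by apply/esym/(@lim_near_cst R^o) => //; near=> k; apply: F; near: k.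
apply: ler_lim; first by apply: is_cvg_near_cst; near=> k; apply: F; near: k.
  exact: is_cvg_series_exp_coeff.
near=> k; apply: ler_sum => i _; rewrite /f; case: ltnP => _; rewrite ?mul1r ?mul0r //.
by rewrite exp_coeffE /= mulr_ge0 // ?invr_ge0 ?exprn_ge0.
Unshelve. all: by end_near. Qed.

Lemma ln_le_sinh (T : R) : 1 <= T -> ln T <= (T - T^-1) / 2.
Proof.
move=> T1; have T0 : 0 < T by exact: lt_le_trans ltr01 T1.
set v := ln T; have v0 : 0 <= v by exact: ln_ge0.
have ET : expR v = T by rewrite /v lnK // posrE.
have hA := expR_ge_quad _ v0; rewrite ET in hA.
set A := 1 + v + v ^+ 2 / 2 in hA.
have A1 : 1 <= A by rewrite /A; nra.
have hi : T^-1 <= A^-1 by rewrite lef_pV2 ?posrE //; lra.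
have hA2 : 2 * v <= A - A^-1.
  have Ap : 0 < A by lra.
  have -> : A - A^-1 = (A ^+ 2 - 1) / A by field; lra.
  rewrite ler_pdivlMr //; rewrite /A; nra.
lra.
Qed.

Lemma ln_ge_1V (z : R) : 0 < z -> 1 - z^-1 <= ln z.
Proof.
move=> z0; have := @le_ln1Dx R (z^-1 - 1).
have -> : 1 + (z^-1 - 1) = z^-1 by lra.
move=> h.
have : ln z^-1 <= z^-1 - 1 by apply: h; have := invr_gt0 z; rewrite z0 => ?; lra.
rewrite lnV ?posrE //; lra.
Qed.

Lemma q_neq0 : q != 0. Proof. by rewrite gt_eqF // q_gt0. Qed.

Lemma lnq : ln (s2 + 1) = - ln q.
Proof.
have h : q * (s2 + 1) = 1 by rewrite /qq; have := s2_sq; nra.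
have -> : s2 + 1 = q^-1.
  by apply: (mulfI q_neq0); rewrite h mulfV // q_neq0.
by rewrite lnV // posrE q_gt0.
Qed.

Definition phi (T : R) : R := q * T + 2 * q ^+ 2 * T / (T - q).

Lemma phi_ge1 T : 1 <= T -> 1 <= phi T.
Proof.
move=> T1; have hq := q_bounds; have Tq : 0 < T - q by case/andP: hq => ? ?; lra.
have e : phi T - 1 - q * (T - 1) ^+ 2 / (T - q) = (q ^+ 2 + 2 * q - 1) * T / (T - q).
  by rewrite /phi; field; rewrite gt_eqF.
have : q ^+ 2 + 2 * q - 1 = 0 by rewrite qsq; lra.
move=> h; rewrite h !mul0r in e.
have : 0 <= q * (T - 1) ^+ 2 / (T - q).
  by apply: divr_ge0; [apply: mulr_ge0; [exact: ltW q_gt0 | exact: sqr_ge0] | exact: ltW].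
lra.
Qed.

Lemma phi_gt0 T : 1 <= T -> 0 < phi T.
Proof. by move=> /phi_ge1; apply: lt_le_trans. Qed.

Lemma ln_phi T : 1 <= T -> ln (phi T) = ln q + ln T + ln (T + q) - ln (T - q).
Proof.
move=> T1; have hq := q_bounds; have Tq : 0 < T - q by case/andP: hq => ? ?; lra.
have Tp : 0 < T + q by case/andP: hq => ? ?; lra.
have T0 : 0 < T by lra.
have -> : phi T = q * T * (T + q) / (T - q) by rewrite /phi; field; rewrite gt_eqF.
rewrite ln_div ?posrE ?mulr_gt0 ?q_gt0 // !lnM ?posrE ?mulr_gt0 ?q_gt0 //.
Qed.

Lemma rate_T x : 0 <= x -> x < 1 -> exists T, [/\ 1 <= T,
  (1 - x) * (T ^+ 2 - q ^+ 2) = 2 * T * q &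
  rateI x = - ln q - (1 - x) * ln T + ln ((T - q) / (T + q))].
Proof.
move=> x0 x1; set y := 1 - x.
have y0 : 0 < y by rewrite /y; lra.
have y1 : y <= 1 by rewrite /y; lra.
set r := Num.sqrt (1 + y ^+ 2).
have r0 : 0 <= r by exact: sqrtr_ge0.
have r2 : r ^+ 2 = 1 + y ^+ 2 by rewrite sqr_sqrtr // addr_ge0 ?exprn_ge0 // ?ltW.
have hq := q_bounds; have q0 := q_gt0.
exists (q * (1 + r) / y); set T := q * (1 + r) / y.
have T0 : 0 < T by rewrite /T divr_gt0 // mulr_gt0 //; lra.
have Ty : T * y = q * (1 + r) by rewrite /T divfK // gt_eqF.
have key : y * (T ^+ 2 - q ^+ 2) = 2 * T * q.
  apply: (mulfI (x := y)); first by rewrite gt_eqF.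
  apply/eqP; rewrite -subr_eq0; apply/eqP.
  have -> : y * (y * (T ^+ 2 - q ^+ 2)) - y * (2 * T * q) =
    (T * y) ^+ 2 - y ^+ 2 * q ^+ 2 - 2 * q * (T * y) by ring.
  rewrite Ty.
  have -> : (q * (1 + r)) ^+ 2 - y ^+ 2 * q ^+ 2 - 2 * q * (q * (1 + r)) =
    q ^+ 2 * (r ^+ 2 - 1 - y ^+ 2) by ring.
  by rewrite r2; ring.
have T1 : 1 <= T.
  have D0 : 0 < T ^+ 2 - q ^+ 2.
    by rewrite -(pmulr_rgt0 _ y0) key; nra.
  have hD : 2 * T * q <= T ^+ 2 - q ^+ 2 by rewrite -key ler_piMl // ltW.
  have hc := qsq; nra.
split => //.
rewrite /rateI -/y -/r lnq.
have -> : y / (1 + r) = q / T by rewrite /T; field; apply/andP; split; rewrite gt_eqF //; lra.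
have -> : (x + r) / (2 - x + r) = (T - q) / (T + q).
  rewrite /T /y; field.
  apply/and3P; split; rewrite gt_eqF //; nra.

rewrite ln_div ?posrE //.
rewrite /y; ring.
Qed.

Lemma rate_phi x T : 0 <= x -> 1 <= T ->
  rateI x = - ln q - (1 - x) * ln T + ln ((T - q) / (T + q)) ->
  rateI x = ln T * x - ln (phi T).
Proof.
move=> x0 T1 ->; have hq := q_bounds; have q0 := q_gt0.
rewrite ln_phi // ln_div ?posrE; try lra; ring.
Qed.

Lemma rate_lb (x : R) : 0 <= x -> x < 1 -> x ^+ 2 / 20 <= rateI x.
Proof.
move=> x0 x1; have [T [T1 key ->]] := rate_T _ x0 x1.
set y := 1 - x in key *.
have hq := q_bounds; have q0 := q_gt0; have hc := qsq.
have T0 : 0 < T by lra.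
have Tq : 0 < T - q by lra.
have Tp : 0 < T + q by lra.
have D0 : 0 < T ^+ 2 - q ^+ 2 by nra.
have ey : y = 2 * T * q / (T ^+ 2 - q ^+ 2) by rewrite -key mulrK // unitfE gt_eqF.
have h1 : 1 - (q * (T + q) / (T - q)) <= - ln q + ln ((T - q) / (T + q)).
  have -> : - ln q + ln ((T - q) / (T + q)) = ln ((T - q) / (T + q) / q).
    rewrite [RHS]ln_div ?posrE ?divr_gt0 //; ring.
  have -> : q * (T + q) / (T - q) = ((T - q) / (T + q) / q)^-1.
    by field; rewrite !gt_eqF.
  by apply: ln_ge_1V; rewrite !divr_gt0.
have h2 : ln T <= (T - T^-1) / 2 by apply: ln_le_sinh.
have y0 : 0 <= y by rewrite ey divr_ge0 // ?ltW // !mulr_gt0.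
have h3 : y * ln T <= y * ((T - T^-1) / 2) by apply: ler_wpM2l.
set D := T ^+ 2 - q ^+ 2 in D0 ey key.
have e1 : 1 - (q * (T + q) / (T - q)) - y * ((T - T^-1) / 2) - q ^+ 2 * (T - 1) ^+ 2 / D
   = (1 - 2 * q - q ^+ 2) * (T ^+ 2 + q) / D.
  rewrite ey /D; field; rewrite !gt_eqF //; nra.
have e0 : 1 - 2 * q - q ^+ 2 = 0 by rewrite hc; ring.
rewrite e0 !mul0r in e1.
have e2 : x * D = (T - 1) * (T + q ^+ 2).
  have -> : x = 1 - y by rewrite /y; ring.
  rewrite mulrBl key mul1r /D; nra.
have main : (T + q ^+ 2) ^+ 2 <= 20 * q ^+ 2 * D.
  rewrite /D hc; nra.
have h4 : x ^+ 2 / 20 <= q ^+ 2 * (T - 1) ^+ 2 / D.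
  have ex : x = (T - 1) * (T + q ^+ 2) / D by rewrite -e2 mulrK // unitfE gt_eqF.
  have num : 0 <= 20 * q ^+ 2 * (T - 1) ^+ 2 * D - ((T - 1) * (T + q ^+ 2)) ^+ 2.
    have := sqr_ge0 (T - 1); nra.
  rewrite ex -subr_ge0.
  have -> : q ^+ 2 * (T - 1) ^+ 2 / D - ((T - 1) * (T + q ^+ 2) / D) ^+ 2 / 20 =
    (20 * q ^+ 2 * (T - 1) ^+ 2 * D - ((T - 1) * (T + q ^+ 2)) ^+ 2) / (20 * D ^+ 2).
    by field; rewrite gt_eqF.
  by rewrite divr_ge0 //; nra.
lra.
Qed.
End Aux.


Section Comb.
Variable R : realType.
Local Notation s2 := (sqrt2 R).
Local Notation q := (qq R).
Local Notation phi := (@phi R).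

Definition pp (j : nat) : R := if j is j'.+1 then 2 * q ^+ j'.+2 else q.
Definition vv (j : nat) : int := 1 - j%:Z.
Definition vr (j : nat) : R := (vv j)%:~R.

Lemma vrE j : vr j = 1 - j%:R.
Proof. by rewrite /vr /vv intrD intrN. Qed.

Lemma vr_le1 j : vr j <= 1.
Proof. rewrite vrE; have := ler0n R j; lra. Qed.

Lemma pp_ge0 j : 0 <= pp j.
Proof.
have q0 := ltW (q_gt0 R).
by case: j => [|j] //=; rewrite mulr_ge0 ?exprn_ge0.
Qed.

Lemma pX_vv j : @pX R (vv j) = pp j.
Proof.
have s2s := s2_sq R; have s20 := s2_ge0 R.
have s2n : s2 != 0 by rewrite gt_eqF //; have := q_gt0 R; rewrite /qq; lra.
rewrite /pX /pX1 /pX2 /vv /=.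
case: j => [|j] /=.
  by rewrite mulr0 add0r (_ : (1 + 0 - 1).+1 = 1)%N // expr1 mulrA mul1r mulVf // mul1r.

have -> : (1 - (j.+1)%:Z = - j%:Z)%R.
  by rewrite -addn1 PoszD opprD addrCA subrr addr0.
have -> : (- j%:Z - 1 = - (j.+1)%:Z)%R.
  by rewrite -addn1 PoszD opprD.
rewrite !oppr_le0 /= !abszN !absz_nat -/(qq R).
by rewrite [q ^+ j.+2]exprS; field.
Qed.

Lemma sum_pp N : \sum_(j < N.+1) pp j = 1 - (1 - q) * q ^+ N.
Proof.
have hc := qsq R.
elim: N => [|N IH]; first by rewrite big_ord1 /= expr0 mulr1; ring.
rewrite big_ord_recr /= IH (exprS q N).
have -> : q ^+ N.+2 = q ^+ 2 * q ^+ N by rewrite -exprD.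
rewrite (_ : (1 - q) * (q * q ^+ N) = (q - q ^+ 2) * q ^+ N); last by ring.
rewrite hc; ring.
Qed.

Lemma sum_pp_le1 N : \sum_(j < N) pp j <= 1.
Proof.
case: N => [|N]; first by rewrite big_ord0 ler01.
rewrite sum_pp; have q0 := q_gt0 R; have q1 := q_lt1 R.
have : 0 <= (1 - q) * q ^+ N by rewrite mulr_ge0 ?exprn_ge0 ?ltW //; lra.
lra.
Qed.

Lemma expR_vr (lam : R) j : expR (lam * vr j) = expR lam * (expR lam)^-1 ^+ j.
Proof.
by rewrite vrE mulrBr mulr1 expRB expRM_natr exprVn.
Qed.

Lemma sum_pp_exp (lam : R) N : 0 <= lam ->
  \sum_(j < N) pp j * expR (lam * vr j) <= phi (expR lam).
Proof.
move=> lam0; set T := expR lam.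
have T1 : 1 <= T by rewrite /T -expR0 ler_expR.
have hq := q_bounds R; have q0 := q_gt0 R.
have Tq : 0 < T - q by case/andP: hq => ? ?; lra.
have T0 : 0 < T by lra.
set K := 2 * q ^+ 2 * T / (T - q).
have K0 : 0 <= K by rewrite /K divr_ge0 ?mulr_ge0 ?exprn_ge0 ?ltW.
have cl : forall N, \sum_(j < N.+1) pp j * expR (lam * vr j) =
    phi T - K * (q ^+ N * T^-1 ^+ N).
  elim => [|n IH].
    by rewrite big_ord1 expR_vr /= expr0 !mulr1 /phi /K; rewrite -/T; ring.
  rewrite big_ord_recr /= IH expR_vr -/T /K !exprS.
  by field; rewrite /= !gt_eqF.
case: N => [|N]; first by rewrite big_ord0; have := @phi_ge1 R T T1; lra.
rewrite cl; have : 0 <= K * (q ^+ N * T^-1 ^+ N).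
  by rewrite mulr_ge0 // mulr_ge0 ?exprn_ge0 ?invr_ge0 ?ltW.
lra.
Qed.

Fixpoint allv (N m : nat) : seq (seq nat) :=
  if m is m'.+1 then [seq j :: z | j <- index_iota 0 N, z <- allv N m'] else [:: [::]].
Fixpoint w (z : seq nat) : R := if z is j :: z' then pp j * w z' else 1.
Fixpoint hit (a s : R) (z : seq nat) {struct z} : bool :=
  (a <= s) || (if z is j :: z' then hit a (s + vr j) z' else false).

Lemma hit_cons a s j z : hit a s (j :: z) = (a <= s) || hit a (s + vr j) z.
Proof. by []. Qed.
Lemma hit_nil a s : hit a s [::] = (a <= s).
Proof. by rewrite /= orbF. Qed.

Lemma w_ge0 z : 0 <= w z.
Proof. elim: z => [|j z IH] /=; [exact: ler01 | exact: mulr_ge0 (pp_ge0 j) IH]. Qed.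

Lemma allv_S N m (P : pred (seq nat)) (F : seq nat -> R) :
  \sum_(z <- allv N m.+1 | P z) F z =
  \sum_(j < N) \sum_(z <- allv N m | P ((j : nat) :: z)) F ((j : nat) :: z).
Proof.
rewrite /= big_mkcond big_allpairs_dep /= big_mkord.
by apply: eq_bigr => j _; rewrite [RHS]big_mkcond.
Qed.

Lemma sum_w N m : \sum_(z <- allv N m) w z <= 1.
Proof.
elim: m => [|m IH]; first by rewrite /= big_cons big_nil addr0.
rewrite (allv_S N m xpredT) /=.
apply: le_trans (sum_pp_le1 N).
apply: ler_sum => j _ /=; rewrite -mulr_sumr.
exact: ler_piMr (pp_ge0 j) IH.
Qed.

Lemma chern_comb (a lam : R) N m s : 0 <= lam ->
  \sum_(z <- allv N m | hit a s z) w z <= expR (lam * (s - a)) * phi (expR lam) ^+ m.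
Proof.
move=> lam0; set T := expR lam.
have T1 : 1 <= T by rewrite /T -expR0 ler_expR.
have ph1 := @phi_ge1 R T T1.
have phm : forall k, 1 <= phi T ^+ k by move=> k; exact: exprn_ege1.
elim: m s => [|m IH] s.
  rewrite /= big_cons big_nil addr0 expr0 mulr1.
  case: ifP => h; last exact: expR_ge0.
  rewrite hit_nil in h.
  by rewrite /w -expR0 ler_expR mulr_ge0 // subr_ge0.
rewrite allv_S.
case: (boolP (a <= s)) => h.
  apply: (@le_trans _ _ 1).
    apply: le_trans (sum_pp_le1 N); apply: ler_sum => j _.
    rewrite -mulr_sumr; apply: ler_piMr (pp_ge0 j) _.
    rewrite (eq_bigl xpredT); first exact: sum_w.
    by move=> z; rewrite hit_cons h.
  rewrite -[1]mulr1; apply: ler_pM => //.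
  by rewrite /w -expR0 ler_expR mulr_ge0 // subr_ge0.
have e : forall j : 'I_N, \sum_(z <- allv N m | hit a s ((j:nat) :: z)) w ((j:nat) :: z) =
    pp j * \sum_(z <- allv N m | hit a (s + vr j) z) w z.
  move=> j; rewrite mulr_sumr; apply: eq_big => z; first by rewrite hit_cons (negbTE h).
  by [].

rewrite (eq_bigr _ (fun j _ => e j)).
apply: le_trans (_ : \sum_(j < N) pp j * (expR (lam * (s + vr j - a)) * phi T ^+ m) <= _).
  by apply: ler_sum => j _; apply: ler_wpM2l; [exact: pp_ge0 | exact: IH].
have -> : \sum_(j < N) pp j * (expR (lam * (s + vr j - a)) * phi T ^+ m) =
    expR (lam * (s - a)) * phi T ^+ m * \sum_(j < N) pp j * expR (lam * vr j).
  rewrite mulr_sumr; apply: eq_bigr => j _.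
  rewrite (_ : lam * (s + vr j - a) = lam * (s - a) + lam * vr j); last by ring.
  rewrite expRD; ring.
rewrite exprSr mulrA; apply: ler_wpM2l; last exact: sum_pp_exp.
by rewrite mulr_ge0 ?expR_ge0 // exprn_ge0 // (le_trans ler01).
Qed.

Lemma zero_comb (a : R) N m s : s + m%:R < a ->
  \sum_(z <- allv N m | hit a s z) w z = 0.
Proof.
elim: m s => [|m IH] s h.
  rewrite /= big_cons big_nil addr0 hit_nil.
  have -> : (a <= s) = false by apply/negbTE; rewrite -ltNge; lra.
  by [].
have h' : ~~ (a <= s) by rewrite -ltNge; have := ler0n R m; rewrite mulrS in h; lra.
rewrite allv_S big1 // => j _.
rewrite (eq_bigl (fun z => hit a (s + vr j) z)); last first.
  by move=> z; rewrite hit_cons (negbTE h').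
rewrite (eq_bigr (fun z => pp j * w z)) // -mulr_sumr IH ?mulr0 //.
by have := vr_le1 j; rewrite mulrS in h; lra.
Qed.

Lemma coverv (N m : nat) (f : nat -> R) :
  (forall i, (i < m)%N -> exists2 j, (j < N)%N & f i = vr j) ->
  exists z, [/\ z \in allv N m, size z = m &
    forall i, (i < m)%N -> f i = vr (nth 0%N z i)].
Proof.
elim: m f => [|m IH] f hf; first by exists [::]; split => //; rewrite inE.
have [z [zin zs zf]] := IH (fun i => f i.+1) (fun i hi => hf i.+1 hi).
have [j jN fj] := hf 0%N (ltn0Sn m).
exists (j :: z); split => /=.
- apply/allpairsPdep; exists j, z; split => //.
  by rewrite mem_index_iota.
- by rewrite zs.
- by case => [|i] hi //=; apply: zf.
Qed.

Lemma hit_of (a s : R) (z : seq nat) k : (k <= size z)%N ->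
  a <= s + \sum_(i < k) vr (nth 0%N z i) -> hit a s z.
Proof.
elim: z s k => [|j z IH] s k hk ha.
  move: hk; rewrite leqn0 => /eqP k0; subst k.
  by rewrite big_ord0 addr0 in ha; rewrite hit_nil.
rewrite hit_cons; case: k hk ha => [|k] hk ha.
  by rewrite big_ord0 addr0 in ha; rewrite ha.
apply/orP; right; apply: (IH _ k) => //.
by rewrite big_ord_recl /= addrA in ha.
Qed.
End Comb.


Lemma geo_small (R : realType) (q c e : R) : 0 < q -> q < 1 -> 0 < e ->
  exists N : nat, c * q ^+ N <= e.
Proof.
move=> q0 q1 e0.
have [c0|c0] := leP c 0.
  by exists 0%N; rewrite expr0 mulr1; lra.
set dl := q^-1 - 1.
have dl0 : 0 < dl by rewrite /dl subr_gt0 invf_gt1.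
have bern : forall N : nat, 1 + N%:R * dl <= (1 + dl) ^+ N.
  elim => [|N IH]; first by rewrite mul0r addr0 expr0.
  rewrite exprS mulrS; have := ler0n R N; nra.
have qi : q = (1 + dl)^-1 by rewrite /dl addrC subrK invrK.
exists (Num.truncn (c / (e * dl))).+1.
have hN := Num.Theory.truncnS_gt (c / (e * dl)).
set N := (Num.truncn (c / (e * dl))).+1 in hN *.
have h1 : c < N%:R * (e * dl) by rewrite -ltr_pdivrMr // mulr_gt0.
rewrite qi exprVn.
have p0 : 0 < (1 + dl) ^+ N by rewrite exprn_gt0 //; lra.
rewrite ler_pdivrMr //.
have := bern N; nra.
Qed.

Section Prob.
Variables (R : realType) (d : measure_display) (T : measurableType d).
Variables (P : probability T R) (X : nat -> T -> R).
Hypothesis hX : iid_steps P X.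
Local Notation q := (qq R).
Local Notation vr := (@vr R).
Local Notation pp := (@pp R).
Local Notation w := (@w R).
Local Notation hit := (@hit R).

Lemma mX i : measurable_fun setT (X i).
Proof. by case: hX => h _; exact: h. Qed.

Lemma mpre i (B : set R) : measurable B -> measurable (X i @^-1` B).
Proof. by move=> mB; rewrite -[X in measurable X]setTI; exact: mX. Qed.

Lemma rect_meas n (B : nat -> set R) : (forall i, measurable (B i)) ->
  measurable [set t | forall i, (i < n)%N -> X i t \in B i].
Proof.
move=> mB; elim: n => [|n IH].
  have -> : [set t | forall i, (i < 0)%N -> X i t \in B i] = setT.
    by apply/seteqP; split => t //= _ i.
  exact: measurableT.
have -> : [set t | forall i, (i < n.+1)%N -> X i t \in B i] =
   [set t | forall i, (i < n)%N -> X i t \in B i] `&` (X n @^-1` B n).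
  apply/seteqP; split => t /=.
    move=> h; split; first by move=> i hi; apply: h; rewrite ltnS ltnW.
    by apply/set_mem/h.
  move=> [h1 h2] i; rewrite ltnS leq_eqVlt => /orP[/eqP ->|hi]; last exact: h1.
  exact: mem_set.
by apply: measurableI; [exact: IH | exact: mpre].
Qed.

Definition Cyl (z : seq nat) : set T :=
  [set t | forall i, (i < size z)%N -> X i t \in [set vr (nth 0%N z i)]].

Lemma Cyl_meas z : measurable (Cyl z).
Proof. by apply: rect_meas => i; exact: measurable_set1. Qed.

Lemma w_prod z : w z = \prod_(i < size z) pp (nth 0%N z i).
Proof.
elim: z => [|j z IH]; first by rewrite big_ord0.
by rewrite /= big_ord_recl /= IH.
Qed.

Lemma P_cyl z : P (Cyl z) = (w z)%:E.
Proof.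
case: hX => _ [hprod hdist].
rewrite /Cyl hprod; last by move=> i; exact: measurable_set1.
rewrite w_prod -prodEFin; apply: eq_bigr => i _.
by rewrite /vr hdist pX_vv.
Qed.


Definition V (N : nat) : set R := [set r | exists2 j, (j < N)%N & r = vr j].

Lemma V0 : V 0 = set0.
Proof. by apply/seteqP; split => r // [j]. Qed.

Lemma V_S N : V N.+1 = V N `|` [set vr N].
Proof.
apply/seteqP; split => r /=.
  move=> [j]; rewrite ltnS leq_eqVlt => /orP[/eqP ->|hj] ->; first by right.
  by left; exists j.
move=> [[j hj ->]|->]; last by exists N.
by exists j => //; rewrite ltnS ltnW.
Qed.

Lemma V_meas N : measurable (V N).
Proof.
elim: N => [|N IH]; first by rewrite V0; exact: measurable0.
by rewrite V_S; apply: measurableU => //; exact: measurable_set1.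
Qed.

Lemma vr_inj i j : vr i = vr j -> i = j.
Proof. rewrite !vrE => h; apply/eqP; rewrite -(eqr_nat R); apply/eqP; lra. Qed.

Lemma PV i N : P (X i @^-1` V N) = (\sum_(j < N) pp j)%:E.
Proof.
case: hX => _ [_ hdist].
elim: N => [|N IH]; first by rewrite big_ord0 V0 preimage_set0 measure0.
rewrite V_S preimage_setU measureU.
- rewrite big_ord_recr /= EFinD; congr (_ + _); first exact: IH.
  by rewrite /vr hdist pX_vv.
- exact: mpre (V_meas N).
- exact: mpre (measurable_set1 _).
- apply/seteqP; split => t //= [[j hj e1] e2].
  have hjN : j = N by apply: vr_inj; rewrite -e1 -e2.
  by move: hj; rewrite hjN ltnn.
Qed.

Definition Bad N m : set T := [set t | exists2 i, (i < m)%N & ~ V N (X i t)].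

Lemma Bad_S N m : Bad N m.+1 = Bad N m `|` (X m @^-1` ~` V N).
Proof.
apply/seteqP; split => t /=.
  move=> [i]; rewrite ltnS leq_eqVlt => /orP[/eqP ->|hi] h; first by right.
  by left; exists i.
move=> [[i hi h]|h]; last by exists m.
by exists i => //; rewrite ltnS ltnW.
Qed.

Lemma Bad0 N : Bad N 0 = set0.
Proof. by apply/seteqP; split => t // [i]. Qed.

Lemma Bad_meas N m : measurable (Bad N m).
Proof.
elim: m => [|m IH]; first by rewrite Bad0; exact: measurable0.
rewrite Bad_S; apply: measurableU => //; apply: mpre.
apply: measurableC; exact: V_meas.
Qed.

Lemma P_Bad N m : (P (Bad N.+1 m) <= (m%:R * ((1 - q) * q ^+ N))%:E)%E.
Proof.
elim: m => [|m IH]; first by rewrite Bad0 measure0 mul0r.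
rewrite Bad_S; apply: le_trans (measureU2 _ _ _) _.
- exact: Bad_meas.
- by apply: mpre; apply: measurableC; exact: V_meas.
have e : P (X m @^-1` ~` V N.+1) = (1 - \sum_(j < N.+1) pp j)%:E.
  rewrite -preimage_setC probability_setC; last exact: mpre (V_meas _).
  by rewrite PV.
have e2 : (P (X m @^-1` ~` V N.+1) <= (1 - \sum_(j < N.+1) pp j)%:E)%E by rewrite e.
apply: le_trans (leeD IH e2) _.
by rewrite -EFinD lee_fin sum_pp mulrS; lra.
Qed.

Lemma U_le (s : seq (seq nat)) (c : pred (seq nat)) :
  (P (\big[setU/set0]_(z <- s | c z) Cyl z) <= (\sum_(z <- s | c z) w z)%:E)%E.
Proof.
elim: s => [|z s IH]; first by rewrite !big_nil measure0.
rewrite !big_cons; case: ifP => hc //.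
apply: le_trans (measureU2 _ _ _) _.
- exact: Cyl_meas.
- by apply: bigsetU_measurable => ? _; exact: Cyl_meas.
by rewrite EFinD; apply: leeD => //; rewrite -(P_cyl z).
Qed.

Lemma mem_U (s : seq (seq nat)) (c : pred (seq nat)) z t : z \in s -> c z -> Cyl z t ->
  (\big[setU/set0]_(z <- s | c z) Cyl z) t.
Proof.
elim: s => // z' s IH; rewrite inE big_cons => /orP[/eqP <-|zs] cz ct.
  by rewrite cz; left.
by case: ifP => _; [right|]; exact: IH.
Qed.

Lemma walk_ge_meas k (a : R) : measurable [set t | a <= walk X k t].
Proof.
have mw : measurable_fun setT (walk X k).
  by rewrite /walk; apply: measurable_sum => i; exact: mX.
have := mw measurableT _ (measurable_itv `[a, +oo[).
rewrite setTI; congr measurable.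
by apply/seteqP; split => t /=; rewrite in_itv /= andbT.
Qed.

Lemma sup_meas' (a : R) m : measurable [set t | exists k, (k <= m)%N /\ a <= walk X k t].
Proof.
elim: m => [|k IH].
  have -> : [set t | exists k, (k <= 0)%N /\ a <= walk X k t] = [set t | a <= walk X 0 t].
    apply/seteqP; split => t /=; first by move=> [k [+ h]]; rewrite leqn0 => /eqP k0; rewrite -k0.
    by move=> h; exists 0%N.
  exact: walk_ge_meas.
have -> : [set t | exists k', (k' <= k.+1)%N /\ a <= walk X k' t] =
  [set t | exists k', (k' <= k)%N /\ a <= walk X k' t] `|` [set t | a <= walk X k.+1 t].
  apply/seteqP; split => t /=.
    move=> [k' [hk h]]; move: hk h; rewrite leq_eqVlt => /orP[/eqP ->|hk] h; first by right.
    by left; exists k'.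
  move=> [[k' [hk h]]|h]; last by exists k.+1.
  by exists k'; split => //; rewrite (leq_trans hk).
by apply: measurableU => //; exact: walk_ge_meas.
Qed.

Lemma sup_meas m x : measurable (sup_event X m x).
Proof. exact: sup_meas'. Qed.


Lemma sup_bound (x : R) m (B : R) :
  (forall N, \sum_(z <- allv N m | hit (x * m%:R) 0 z) w z <= B) ->
  (P (sup_event X m x) <= B%:E)%E.
Proof.
move=> hB; set a := x * m%:R.
have key : forall N, (P (sup_event X m x) <= (B + m%:R * ((1 - q) * q ^+ N))%:E)%E.
  move=> N.
  have sub : sup_event X m x `<=`
      Bad N.+1 m `|` \big[setU/set0]_(z <- allv N.+1 m | hit a 0 z) Cyl z.
    move=> t [k [km hk]].
    have [hb|hb] := pselect (Bad N.+1 m t); first by left.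
    right.
    have hv : forall i, (i < m)%N -> exists2 j, (j < N.+1)%N & X i t = vr j.
      by move=> i im; apply: contrapT => hn; apply: hb; exists i.
    have [z [zin zs zf]] := @coverv R N.+1 m (fun i => X i t) hv.
    apply: (mem_U (allv N.+1 m) (fun z => hit a 0 z) z t zin).
      apply: (@hit_of R a 0 z k); first by rewrite zs.
      rewrite add0r; apply: (le_trans hk); rewrite /walk le_eqVlt; apply/orP; left.
      apply/eqP; apply: eq_bigr => i _; apply: zf.
      exact: leq_trans (ltn_ord i) km.
    move=> i hi; apply: mem_set; rewrite /= -zf //; by rewrite -zs.
  apply: le_trans (le_measure _ _ _ sub) _.
  - by rewrite inE; exact: sup_meas.
  - rewrite inE; apply: measurableU; first exact: Bad_meas.
    by apply: bigsetU_measurable => ? _; exact: Cyl_meas.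
  apply: le_trans (measureU2 _ _ _) _.
  - exact: Bad_meas.
  - by apply: bigsetU_measurable => ? _; exact: Cyl_meas.
  rewrite EFinD addeC; apply: leeD; first exact: P_Bad.
  apply: le_trans (U_le _ _) _; rewrite lee_fin; exact: hB.
move: key; case E: (P (sup_event X m x)) => [r| |] key.
- rewrite lee_fin; apply/ler_addgt0Pr => e e0.
  have [N hN] := @geo_small R q (m%:R * (1 - q)) e (q_gt0 R) (q_lt1 R) e0.
  have := key N; rewrite lee_fin => h.
  rewrite mulrA in h; lra.
- by have := key 0%N.
- by rewrite leNye.
Qed.

Lemma end_le_sup m x : (P (end_event X m x) <= P (sup_event X m x))%E.
Proof.
apply: le_measure; rewrite ?inE.
- exact: walk_ge_meas.
- exact: sup_meas.
by move=> t h; exists m.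
Qed.

End Prob.


Lemma part1 (R : realType) (d : measure_display) (T : measurableType d)
  (P : probability T R) (X : nat -> T -> R) : iid_steps P X ->
  forall (m : nat) (x : R), (0 < m)%N -> 0 <= x -> x < 1 ->
     (P (sup_event X m x) <= (expR (- (m%:R * rateI x)))%:E)%E /\
     (P (end_event X m x) <= (expR (- (m%:R * rateI x)))%:E)%E.
Proof.
move=> hX m x m0 x0 x1.
have [Tt [T1 key hr]] := @rate_T R x x0 x1.
have hrp := @rate_phi R x Tt x0 T1 hr.
set lam := ln Tt in hrp.
have lam0 : 0 <= lam by exact: ln_ge0.
have Tt0 : 0 < Tt by exact: lt_le_trans ltr01 T1.
have eT : expR lam = Tt by rewrite /lam lnK // posrE.
have ph0 := @phi_gt0 R Tt T1.
have bound : (P (sup_event X m x) <= (expR (- (m%:R * rateI x)))%:E)%E.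
  apply: (@sup_bound _ _ _ _ _ hX) => N.
  apply: le_trans (@chern_comb R (x * m%:R) lam N m 0 lam0) _.
  rewrite eT hrp.
  have -> : - (m%:R * (lam * x - ln (@phi R Tt))) = lam * (0 - x * m%:R) + m%:R * ln (@phi R Tt).
    by ring.
  by rewrite expRD expRM_natl lnK // posrE.
split => //; apply: le_trans bound; exact: end_le_sup.
Qed.

Lemma phi_invq (R : realType) : @phi R (qq R)^-1 = 1 + qq R.
Proof.
have hq := q_bounds R; have q0 := q_gt0 R; have hc := qsq R.
have e : @phi R (qq R)^-1 - (1 + qq R) =
    qq R * (qq R ^+ 2 + 2 * qq R - 1) / (1 - qq R ^+ 2).
  by rewrite /phi; field; rewrite !gt_eqF //; nra.
have h0 : qq R ^+ 2 + 2 * qq R - 1 = 0 by rewrite hc; ring.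
by move: e; rewrite h0 mulr0 mul0r => /eqP; rewrite subr_eq0 => /eqP.
Qed.

Theorem proposition2p3 (R : realType) :
  (forall (d : measure_display) (T : measurableType d) (P : probability T R)
      (X : nat -> T -> R), iid_steps P X ->
   forall (m : nat) (x : R), (0 < m)%N -> 0 <= x -> x < 1 ->
     (P (sup_event X m x) <= (expR (- (m%:R * rateI x)))%:E)%E /\
     (P (end_event X m x) <= (expR (- (m%:R * rateI x)))%:E)%E)
  /\
  exists eps : R, 0 < eps /\
    (forall x : R, 0 <= x -> x < 1 -> eps * x ^+ 2 <= rateI x) /\
    (forall (d : measure_display) (T : measurableType d) (P : probability T R)
        (X : nat -> T -> R), iid_steps P X ->
     forall (m : nat) (x : R), (0 < m)%N -> 0 <= x ->
       (P (sup_event X m x) <= (expR (- (eps * m%:R * x ^+ 2)))%:E)%E /\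
       (P (end_event X m x) <= (expR (- (eps * m%:R * x ^+ 2)))%:E)%E).
Proof.
split; first exact: part1.
exists (1 / 20); split; first by rewrite divr_gt0.
have lb : forall x : R, 0 <= x -> x < 1 -> 1 / 20 * x ^+ 2 <= rateI x.
  by move=> x x0 x1; have := @rate_lb R x x0 x1; lra.
split; first exact: lb.
move=> d T P X hX m x m0 x0.
have m0' : 0 < m%:R :> R by rewrite ltr0n.
suff sb : (P (sup_event X m x) <= (expR (- (1 / 20 * m%:R * x ^+ 2)))%:E)%E.
  by split => //; apply: le_trans sb; exact: end_le_sup.
have [x1|x1] := ltP x 1.
  have [h _] := @part1 R d T P X hX m x m0 x0 x1.
  apply: le_trans h _; rewrite lee_fin ler_expR lerN2.
  have := lb x x0 x1; nra.
move: x1; rewrite le_eqVlt => /orP[/eqP x1|x1].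
  subst x.
  have hq := q_bounds R; have q0 := q_gt0 R; have hc := qsq R.
  have lam0 : 0 <= - ln (qq R) by rewrite oppr_ge0 ln_le0 //; lra.
  apply: (@sup_bound _ _ _ _ _ hX) => N.
  apply: le_trans (@chern_comb R (1 * m%:R) (- ln (qq R)) N m 0 lam0) _.
  have eT : expR (- ln (qq R)) = (qq R)^-1 by rewrite expRN lnK // posrE.
  rewrite eT phi_invq.
  have -> : - ln (qq R) * (0 - 1 * m%:R) = m%:R * ln (qq R) by ring.
  rewrite expRM_natl lnK ?posrE // -exprMn.
  have -> : qq R * (1 + qq R) = 1 - qq R by rewrite mulrDr mulr1 -expr2 hc; ring.
  have -> : - (1 / 20 * m%:R * 1 ^+ 2) = m%:R * (- (1 / 20)) :> R by ring.
  rewrite expRM_natl; apply: lerXn2r; rewrite ?nnegrE ?expR_ge0 //; first lra.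
  by apply: le_trans (expR_ge1Dx _); lra.
apply: le_trans (_ : (P (sup_event X m x) <= 0%:E)%E) _; last by rewrite lee_fin expR_ge0.
apply: (@sup_bound _ _ _ _ _ hX) => N.
rewrite zero_comb //; nra.
Qed.
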